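(* Let $\Lambda$ denote the von Mangoldt function and let $\varepsilon>0$ be a small number. Then, as $x\to\infty$, \[ \sum_{n\leq x}\Lambda([x/n])\Lambda(2[x/n]+1) = s_1 x + O\left(x^{(2+\varepsilon)/3}\log^2 x\right), \] where the density constant is \[ s_1=\sum_{n\geq 1}\frac{\Lambda(n)\Lambda(2n+1)}{n(n+1)}\geq 0.620794. \]
   Context: $[t]$ denotes the largest integer not exceeding $t$. The von Mangoldt function is $\Lambda(m)=\log p$ if $m=p^k$ for a prime $p$ and an integer $k\geq 1$, and $\Lambda(m)=0$ otherwise. The sum is over positive integers $n\le x$. *)

(* Defs.v *)
From Stdlib Require Import Reals ZArith Znumtheory ClassicalDescription.
From Coquelicot Require Import Coquelicot.
Open Scope R_scope.

Definition is_prime_power_of (p m : nat) : Prop :=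
  prime (Z.of_nat p) /\ exists k : nat, (1 <= k)%nat /\ m = (p ^ k)%nat.

(* von Mangoldt function: Lambda m = log p if m = p^k (p prime, k >= 1),
   and 0 otherwise.  Since such a p is unique and p <= m, this is the sum
   over candidate p in [2, m] of log p times the indicator. *)
Definition vonMangoldt (m : nat) : R :=
  sum_n_m (fun p : nat =>
             if excluded_middle_informative (is_prime_power_of p m)
             then ln (INR p) else 0) 2 m.

(* [t] : the largest integer not exceeding t, as a natural number
   (only used for t >= 0). *)
Definition floor_nat (t : R) : nat := Z.to_nat (Int_part t).

Definition S_sum (x : R) : R :=
  sum_n_m (fun n : nat =>
             vonMangoldt (floor_nat (x / INR n)) *
             vonMangoldt (2 * floor_nat (x / INR n) + 1)) 1 (floor_nat x).

Definition s1_term (n : nat) : R :=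
  vonMangoldt n * vonMangoldt (2 * n + 1) / (INR n * (INR n + 1)).

(* Main.v *)
Require Import Defs.
From Stdlib Require Import Reals.
From Coquelicot Require Import Coquelicot.
From Stdlib Require Import ZArith Znumtheory Lia Lra Psatz ClassicalDescription.
Open Scope R_scope.


Lemma sum_ge0 (f : nat -> R) a b :
  (forall j, (a <= j <= b)%nat -> 0 <= f j) -> 0 <= sum_n_m f a b.
Proof.
  induction b as [|b IH]; intros H.
  - destruct a. rewrite sum_n_n. apply H; lia.
    rewrite sum_n_m_zero by lia. unfold zero; simpl; lra.
  - destruct (le_lt_dec a (S b)) as [Hab|Hab].
    2:{ rewrite sum_n_m_zero by lia. unfold zero; simpl; lra. }
    rewrite sum_n_Sm by lia. unfold plus; simpl.
    assert (0 <= f (S b)) by (apply H; lia).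
    destruct (le_lt_dec a b).
    + assert (0 <= sum_n_m f a b) by (apply IH; intros; apply H; lia). lra.
    + rewrite sum_n_m_zero by lia. unfold zero; simpl; lra.
Qed.

Lemma sum_le_loc (f g : nat -> R) a b :
  (forall j, (a <= j <= b)%nat -> f j <= g j) -> sum_n_m f a b <= sum_n_m g a b.
Proof.
  intros H.
  rewrite (sum_n_m_ext_loc g (fun k => f k + (g k - f k)) a b); [|intros; simpl; ring].
  rewrite (sum_n_m_plus f (fun k => g k - f k)).
  assert (0 <= sum_n_m (fun k => g k - f k) a b).
  { apply sum_ge0. intros j Hj; specialize (H j Hj); lra. }
  unfold plus; simpl. lra.
Qed.

Lemma sum_zero_loc (f : nat -> R) a b :
  (forall j, (a <= j <= b)%nat -> f j = 0) -> sum_n_m f a b = 0.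
Proof.
  intros H. rewrite (sum_n_m_ext_loc f (fun _ => zero)) by (intros; apply H; auto).
  exact (@sum_n_m_const_zero R_AbelianMonoid a b).
Qed.

Lemma sum_ge_term (f : nat -> R) a b i :
  (forall j, (a <= j <= b)%nat -> 0 <= f j) -> (a <= i <= b)%nat -> f i <= sum_n_m f a b.
Proof.
  revert i. induction b as [|b IH]; intros i H Hi.
  - assert (a = 0%nat /\ i = 0%nat) as [-> ->] by lia. rewrite sum_n_n; lra.
  - rewrite sum_n_Sm by lia. unfold plus; simpl.
    destruct (Nat.eq_dec i (S b)) as [->|Hne].
    + assert (0 <= sum_n_m f a b) by (apply sum_ge0; intros; apply H; lia). lra.
    + assert (f i <= sum_n_m f a b) by (apply IH; [intros; apply H|]; lia).
      assert (0 <= f (S b)) by (apply H; lia). lra.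
Qed.

Lemma sum_unique_le (f : nat -> R) a b M :
  (forall j, (a <= j <= b)%nat -> 0 <= f j <= M) ->
  (forall j k, (a <= j <= b)%nat -> (a <= k <= b)%nat -> f j <> 0 -> f k <> 0 -> j = k) ->
  0 <= M -> sum_n_m f a b <= M.
Proof.
  induction b as [|b IH]; intros H U HM.
  - destruct a. rewrite sum_n_n. apply H; lia.
    rewrite sum_n_m_zero by lia. unfold zero; simpl; lra.
  - destruct (le_lt_dec a (S b)) as [Hab|Hab].
    2:{ rewrite sum_n_m_zero by lia. unfold zero; simpl; lra. }
    rewrite sum_n_Sm by lia. unfold plus; simpl.
    destruct (Req_dec (f (S b)) 0) as [E|E].
    + rewrite E. rewrite Rplus_0_r. apply IH; auto.
      intros; apply H; lia. intros; apply U; auto; lia.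
    + rewrite sum_zero_loc. rewrite Rplus_0_l; apply H; lia.
      intros j Hj. destruct (Req_dec (f j) 0); auto.
      exfalso. assert (j = S b) by (apply U; auto; lia). lia.
Qed.

Lemma sum_telescope (u : nat -> R) a b : (a <= S b)%nat ->
  sum_n_m (fun k => u k - u (S k)) a b = u a - u (S b).
Proof.
  induction b as [|b IH]; intros H.
  - destruct a. rewrite sum_n_n. reflexivity.
    assert (a = 0%nat) as -> by lia. rewrite sum_n_m_zero by lia. simpl. unfold zero; simpl; ring.
  - destruct (Nat.eq_dec a (S (S b))) as [->|Hne].
    + rewrite sum_n_m_zero by lia. unfold zero; simpl; ring.
    + rewrite sum_n_Sm by lia. rewrite IH by lia. unfold plus; simpl; ring.
Qed.

Lemma sum_const_R (c : R) a b : (a <= S b)%nat ->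
  sum_n_m (fun _ => c) a b = (INR (S b) - INR a) * c.
Proof.
  intros H. rewrite sum_n_m_const. rewrite minus_INR by lia. reflexivity.
Qed.

Lemma block_decomp (F : nat -> R) (bb : nat -> nat) K :
  (forall m, (1 <= m <= K)%nat -> (bb (S m) <= bb m)%nat) ->
  sum_n_m F (S (bb (S K))) (bb 1%nat) =
  sum_n_m (fun m => sum_n_m F (S (bb (S m))) (bb m)) 1 K.
Proof.
  induction K as [|K IH]; intros H.
  - rewrite sum_n_m_zero by lia. rewrite sum_n_m_zero by lia. reflexivity.
  - rewrite sum_n_Sm by lia. rewrite <- IH by (intros; apply H; lia).
    assert (Hmono : forall m, (1 <= m <= S K)%nat -> (bb m <= bb 1%nat)%nat).
    { intros m Hm. induction m as [|m IHm]. lia. destruct m. lia.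
      specialize (H (S m) ltac:(lia)). specialize (IHm ltac:(lia)). lia. }
    rewrite (sum_n_m_Chasles F (S (bb (S (S K)))) (bb (S K)) (bb 1%nat)).
    + unfold plus; simpl. ring.
    + specialize (H (S K) ltac:(lia)). lia.
    + apply Hmono; lia.
Qed.


Lemma floor_spec t : 0 <= t ->
  INR (floor_nat t) <= t < INR (floor_nat t) + 1.
Proof.
  intros Ht. unfold floor_nat. destruct (base_Int_part t) as [H1 H2].
  assert (Hz : (0 <= Int_part t)%Z).
  { assert (-1 < IZR (Int_part t)) by lra.
    assert (-1 < Int_part t)%Z by (apply lt_IZR; exact H). lia. }
  rewrite INR_IZR_INZ, Z2Nat.id by exact Hz. lra.
Qed.

Lemma floor_unique t k : 0 <= t -> INR k <= t < INR k + 1 -> floor_nat t = k.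
Proof.
  intros Ht Hk. destruct (floor_spec t Ht) as [H1 H2].
  assert (A1 : INR k < INR (floor_nat t) + 1) by lra.
  assert (A2 : INR (floor_nat t) < INR k + 1) by lra.
  rewrite <- S_INR in A1, A2. apply INR_lt in A1. apply INR_lt in A2. lia.
Qed.

Lemma floor_ge t n : 0 <= t -> INR n <= t -> (n <= floor_nat t)%nat.
Proof.
  intros Ht Hn. destruct (floor_spec t Ht) as [H1 H2].
  assert (INR n < INR (S (floor_nat t))) by (rewrite S_INR; lra).
  apply INR_lt in H. lia.
Qed.

Lemma prime_ge2 p : prime (Z.of_nat p) -> (2 <= p)%nat.
Proof. intros H. destruct H as [H _]. lia. Qed.

Lemma ppow_unique p q m : is_prime_power_of p m -> is_prime_power_of q m -> p = q.
Proof.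
  intros [Hp [k [Hk Em]]] [Hq [j [Hj Em']]].
  assert (Z.of_nat p = Z.of_nat q); [|lia].
  apply (Zpow_facts.prime_power_prime _ _ (Z.of_nat j)); auto. lia.
  rewrite <- Nat2Z.inj_pow, <- Em'. rewrite Em.
  destruct k. lia. rewrite Nat.pow_succ_r', Nat2Z.inj_mul.
  apply Z.divide_mul_l. apply Z.divide_refl.
Qed.

Lemma ppow_le p m : is_prime_power_of p m -> (p <= m)%nat.
Proof.
  intros [Hp [k [Hk Em]]]. apply prime_ge2 in Hp. subst m.
  destruct k. lia. rewrite Nat.pow_succ_r'.
  assert (1 <= p ^ k)%nat by (apply Nat.neq_0_lt_0; apply Nat.pow_nonzero; lia). nia.
Qed.

Lemma vM_nonneg m : 0 <= vonMangoldt m.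
Proof.
  unfold vonMangoldt. apply sum_ge0. intros j Hj.
  destruct excluded_middle_informative; [|lra].
  rewrite <- ln_1. apply ln_le; [lra|]. apply (le_INR 1). lia.
Qed.

Lemma vM_le_ln m : (1 <= m)%nat -> vonMangoldt m <= ln (INR m).
Proof.
  intros Hm. assert (H0 : 0 <= ln (INR m)).
  { rewrite <- ln_1. apply ln_le; [lra|]. apply (le_INR 1). lia. }
  unfold vonMangoldt. apply sum_unique_le; auto.
  - intros j Hj. destruct excluded_middle_informative as [i|i]; [|lra].
    split. rewrite <- ln_1. apply ln_le; [lra|]. apply (le_INR 1). lia.
    apply ln_le. apply lt_0_INR; lia. apply le_INR. apply ppow_le; auto.
  - intros j k Hj Hk.
    destruct (excluded_middle_informative (is_prime_power_of j m)) as [i1|i1];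
    destruct (excluded_middle_informative (is_prime_power_of k m)) as [i2|i2]; try lra.
    intros _ _. exact (ppow_unique _ _ _ i1 i2).
Qed.

Lemma vM_ge p m : is_prime_power_of p m -> ln (INR p) <= vonMangoldt m.
Proof.
  intros H. unfold vonMangoldt.
  assert (Hp := H). destruct Hp as [Hp _]. apply prime_ge2 in Hp.
  assert (Hpm := ppow_le _ _ H).
  eapply Rle_trans; [|apply (sum_ge_term _ _ _ p)].
  - cbv beta. destruct (excluded_middle_informative (is_prime_power_of p m)); [lra|contradiction].
  - intros j Hj. destruct (excluded_middle_informative (is_prime_power_of j m)); [|lra].
    rewrite <- ln_1. apply ln_le; [lra|]. apply (le_INR 1). lia.
  - lia.
Qed.


Lemma ln_le_self q : 0 < q -> ln q <= q.
Proof.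
  intros Hq. destruct (Req_dec (ln q) 0) as [E|E]. rewrite E; lra.
  pose proof (exp_ineq1 _ E). rewrite exp_ln in H by auto. lra.
Qed.

Lemma ln_le_4rt y : 0 < y -> ln y <= 4 * sqrt (sqrt y).
Proof.
  intros Hy. set (q := sqrt (sqrt y)).
  assert (Hs : 0 < sqrt y) by (apply sqrt_lt_R0; auto).
  assert (Hq : 0 < q) by (apply sqrt_lt_R0; auto).
  assert (Eq : y = q ^ 4).
  { assert (E1 : q * q = sqrt y) by (apply sqrt_sqrt; lra).
    assert (E2 : sqrt y * sqrt y = y) by (apply sqrt_sqrt; lra).
    replace (q ^ 4) with ((q*q)*(q*q)) by ring. rewrite E1, E2. reflexivity. }
  rewrite Eq at 1. rewrite ln_pow by auto. pose proof (ln_le_self q Hq). simpl. lra.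
Qed.

Lemma ln_nonneg_nat m : (1 <= m)%nat -> 0 <= ln (INR m).
Proof. intros. rewrite <- ln_1. apply ln_le; [lra|]. apply (le_INR 1). lia. Qed.

Definition gg (m : nat) : R := vonMangoldt m * vonMangoldt (2 * m + 1).

Lemma gg_nonneg m : 0 <= gg m.
Proof. unfold gg. apply Rmult_le_pos; apply vM_nonneg. Qed.

Lemma gg_le_lnln m : (1 <= m)%nat -> gg m <= ln (INR m) * ln (INR (2*m+1)).
Proof.
  intros Hm. unfold gg. apply Rmult_le_compat; try apply vM_nonneg.
  apply vM_le_ln; auto. apply vM_le_ln; lia.
Qed.

Lemma gg_le_sqrt m : (1 <= m)%nat -> gg m <= 22 * sqrt (INR m).
Proof.
  intros Hm. eapply Rle_trans; [apply gg_le_lnln; auto|].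
  assert (H1 : 1 <= INR m) by (apply (le_INR 1); lia).
  assert (H2 : INR (2*m+1) = 2 * INR m + 1) by (rewrite plus_INR, mult_INR; simpl; ring).
  pose proof (ln_le_4rt (INR m) ltac:(lra)) as La.
  pose proof (ln_le_4rt (INR (2*m+1)) ltac:(rewrite H2; lra)) as Lb.
  pose proof (ln_nonneg_nat m Hm) as P1. pose proof (ln_nonneg_nat (2*m+1) ltac:(lia)) as P2.
  rewrite H2 in *.
  set (s := sqrt (INR m)) in *. set (q := sqrt s) in *. set (r := sqrt (sqrt (2 * INR m + 1))) in *.
  assert (Hs : 0 <= s) by apply sqrt_pos. assert (Hq : 0 <= q) by apply sqrt_pos.
  assert (Hr : 0 <= r) by apply sqrt_pos.
  assert (Eq : q * q = s) by (apply sqrt_sqrt; auto).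
  assert (Es : s * s = INR m) by (apply sqrt_sqrt; lra).
  assert (Er : r * r * (r * r) = 2 * INR m + 1).
  { unfold r. rewrite sqrt_sqrt by apply sqrt_pos. rewrite sqrt_sqrt; lra. }
  assert (Hrq : r <= 1.375 * q).
  { destruct (Rle_lt_dec r (1.375 * q)) as [h|h]; auto. exfalso.
    assert (r * r > 1.375 * q * (1.375 * q)) by nra.
    assert (r*r*(r*r) > (1.375 * q * (1.375 * q)) * (1.375 * q * (1.375 * q))) by nra.
    nra. }
  apply Rle_trans with ((4*q) * (4*r)).
  apply Rmult_le_compat; auto.
  nra.
Qed.

Lemma term_le m : (1 <= m)%nat ->
  s1_term m <= 44 * (/ sqrt (INR m) - / sqrt (INR (S m))).
Proof.
  intros Hm. unfold s1_term. fold (gg m).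
  pose proof (gg_le_sqrt m Hm) as G. pose proof (gg_nonneg m).
  assert (H1 : 1 <= INR m) by (apply (le_INR 1); lia).
  rewrite S_INR.
  set (a := sqrt (INR m)) in *. set (b := sqrt (INR m + 1)).
  assert (Ea : a * a = INR m) by (apply sqrt_sqrt; lra).
  assert (Eb : b * b = INR m + 1) by (apply sqrt_sqrt; lra).
  assert (Ha : 0 < a) by (apply sqrt_lt_R0; lra).
  assert (Hb : 0 < b) by (apply sqrt_lt_R0; lra).
  assert (Hab : a <= b) by (apply sqrt_le_1_alt; lra).
  rewrite <- Eb, <- Ea.
  apply Rle_trans with (22 * a / (a * a * (b * b))).
  { unfold Rdiv. apply Rmult_le_compat_r; auto. left; apply Rinv_0_lt_compat. nra. }
  apply Rmult_le_reg_r with (a * a * (b * b)). nra.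
  field_simplify; try lra.
  assert (1 <= 2 * b * b - 2 * a * b) by nra.
  nra.
Qed.


Definition P k := sum_n_m s1_term 1 k.

Lemma term_nonneg m : 0 <= s1_term m.
Proof.
  unfold s1_term. fold (gg m). destruct m.
  - simpl. unfold Rdiv. rewrite Rmult_0_l, Rinv_0, Rmult_0_r. lra.
  - apply Rmult_le_pos. apply gg_nonneg. left; apply Rinv_0_lt_compat.
    pose proof (lt_0_INR (S m) ltac:(lia)). nra.
Qed.

Lemma tail_le a c : (1 <= a)%nat -> sum_n_m s1_term a c <= 44 / sqrt (INR a).
Proof.
  intros Ha.
  assert (Hpos : 0 < sqrt (INR a)) by (apply sqrt_lt_R0; apply lt_0_INR; lia).
  destruct (le_lt_dec a c) as [Hac|Hac].
  2:{ rewrite sum_n_m_zero by lia. unfold zero; simpl.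
      apply Rlt_le, Rdiv_lt_0_compat; lra. }
  eapply Rle_trans.
  { apply (sum_le_loc _ (fun k => 44 * ((fun k => / sqrt (INR k)) k - (fun k => / sqrt (INR k)) (S k)))).
    intros j Hj. apply term_le. lia. }
  rewrite (@sum_n_m_mult_l R_Ring 44 (fun k => (fun k => / sqrt (INR k)) k - (fun k => / sqrt (INR k)) (S k))).
  rewrite sum_telescope by lia.
  assert (0 < / sqrt (INR (S c))).
  { apply Rinv_0_lt_compat, sqrt_lt_R0, lt_0_INR; lia. }
  assert (44 * (/ sqrt (INR a) - / sqrt (INR (S c))) <= 44 / sqrt (INR a)) by (unfold Rdiv; lra).
  exact H0.
Qed.

Lemma P_split a b : (a <= b)%nat -> P b = P a + sum_n_m s1_term (S a) b.
Proof.
  intros H. unfold P. destruct a.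
  - rewrite (sum_n_m_zero _ 1 0) by lia. unfold zero; simpl. rewrite Rplus_0_l. reflexivity.
  - rewrite (sum_n_m_Chasles _ 1 (S a) b) by lia. reflexivity.
Qed.

Lemma P_mono a b : (a <= b)%nat -> P a <= P b.
Proof.
  intros H. rewrite (P_split a b H).
  assert (0 <= sum_n_m s1_term (S a) b) by (apply sum_ge0; intros; apply term_nonneg). lra.
Qed.

Lemma P_le_44 k : P k <= 44.
Proof.
  unfold P. eapply Rle_trans. apply tail_le; lia. simpl. rewrite sqrt_1. lra.
Qed.

Lemma sn_eq k : sum_n (fun n => s1_term (S n)) k = P (S k).
Proof. unfold sum_n, P. rewrite sum_n_m_S. reflexivity. Qed.

Lemma series_exists : exists l : R,
  is_series (fun n => s1_term (S n)) l /\
  (forall N, (1 <= N)%nat -> P N <= l /\ l <= P N + 44 / sqrt (INR (S N))).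
Proof.
  set (u := sum_n (fun n => s1_term (S n))).
  assert (Hex : ex_finite_lim_seq u).
  { apply (ex_finite_lim_seq_incr u 44).
    - intros n. unfold u. rewrite !sn_eq. apply P_mono; lia.
    - intros n. unfold u. rewrite sn_eq. apply P_le_44. }
  destruct Hex as [l Hl]. exists l. split. exact Hl.
  intros N HN. split.
  - assert (Hc := is_lim_seq_const (P N)).
    assert (R1 := is_lim_seq_le_loc (fun _ => P N) u (P N) l).
    apply R1; auto.
    exists N. intros k Hk. unfold u. rewrite sn_eq. apply P_mono; lia.
  - assert (Hc := is_lim_seq_const (P N + 44 / sqrt (INR (S N)))).
    assert (R1 := is_lim_seq_le u (fun _ => P N + 44 / sqrt (INR (S N))) l (P N + 44 / sqrt (INR (S N)))).
    apply R1; auto.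
    intros k. unfold u. rewrite sn_eq.
    assert (0 < 44 / sqrt (INR (S N))).
    { apply Rdiv_lt_0_compat. lra. apply sqrt_lt_R0, lt_0_INR; lia. }
    destruct (le_lt_dec (S k) N) as [h|h].
    + pose proof (P_mono _ _ h). lra.
    + rewrite (P_split N (S k)) by lia. pose proof (tail_le (S N) (S k) ltac:(lia)). lra.
Qed.


Lemma exp_INR_mult k t : exp (INR k * t) = exp t ^ k.
Proof.
  induction k as [|k IH]. simpl. rewrite Rmult_0_l, exp_0. reflexivity.
  rewrite S_INR. replace ((INR k + 1) * t) with (INR k * t + t) by ring.
  rewrite exp_plus, IH. simpl. ring.
Qed.

Lemma ln_lb (k : nat) (u w a : Z) : (0 < w < u)%Z ->
  (u ^ Z.of_nat k <= a * (u - w) ^ Z.of_nat k)%Z ->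
  INR k * (IZR w / IZR u) <= ln (IZR a).
Proof.
  intros Hw Hp. set (t := IZR w / IZR u).
  assert (Hu : 0 < IZR u) by (apply IZR_lt; lia).
  assert (Huw : 0 < IZR (u - w)) by (apply IZR_lt; lia).
  assert (Ht : 0 < t < 1).
  { unfold t. split. apply Rdiv_lt_0_compat; auto; apply IZR_lt; lia.
    apply Rmult_lt_reg_r with (IZR u); auto. unfold Rdiv. rewrite Rmult_assoc, Rinv_l by lra.
    rewrite Rmult_1_r, Rmult_1_l. apply IZR_lt; lia. }
  assert (He : exp t <= IZR u / IZR (u - w)).
  { assert (1 - t < exp (- t)) by (pose proof (exp_ineq1 (-t) ltac:(lra)); lra).
    rewrite exp_Ropp in H.
    assert (E1 : 1 - t = IZR (u - w) / IZR u) by (unfold t; rewrite minus_IZR; field; lra).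
    rewrite E1 in H.
    assert (0 < exp t) by apply exp_pos.
    apply Rmult_le_reg_r with (IZR (u - w) / IZR u). apply Rdiv_lt_0_compat; auto.
    replace (IZR u / IZR (u - w) * (IZR (u - w) / IZR u)) with 1 by (field; lra).
    apply Rmult_lt_compat_l with (r := exp t) in H; auto.
    rewrite Rinv_r in H by lra. lra. }
  assert (Hek : exp (INR k * t) <= IZR a).
  { rewrite exp_INR_mult. eapply Rle_trans. apply pow_incr. split. left; apply exp_pos. exact He.
    unfold Rdiv. rewrite Rpow_mult_distr, pow_inv, !pow_IZR.
    assert (0 < IZR ((u - w) ^ Z.of_nat k)) by (apply IZR_lt, Z.pow_pos_nonneg; lia).
    apply Rmult_le_reg_r with (IZR ((u - w) ^ Z.of_nat k)); auto.
    rewrite Rmult_assoc, Rinv_l by lra. rewrite Rmult_1_r, <- mult_IZR. apply IZR_le. exact Hp. }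
  rewrite <- (ln_exp (INR k * t)). apply ln_le. apply exp_pos. exact Hek.
Qed.

Lemma ln2_lb : 0.69 <= ln 2.
Proof.
  pose proof (ln_lb 100 10000 69 2 ltac:(lia) ltac:(vm_compute; discriminate)) as H.
  replace (INR 100) with 100 in H by (simpl; ring). lra.
Qed.

Lemma ln3_lb : 1.09 <= ln 3.
Proof.
  pose proof (ln_lb 100 10000 109 3 ltac:(lia) ltac:(vm_compute; discriminate)) as H.
  replace (INR 100) with 100 in H by (simpl; ring). lra.
Qed.


Lemma prime_2 : prime (Z.of_nat 2).
Proof.
  simpl. apply prime_intro; [lia|]. intros n Hn. apply Zgcd_1_rel_prime.
  assert (H : (n = 1)%Z) by lia.
  repeat (destruct H as [->|H]; [reflexivity|]); subst; reflexivity.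
Qed.

Lemma prime_3 : prime (Z.of_nat 3).
Proof.
  simpl. apply prime_intro; [lia|]. intros n Hn. apply Zgcd_1_rel_prime.
  assert (H : (n = 1 \/ n = 2)%Z) by lia.
  repeat (destruct H as [->|H]; [reflexivity|]); subst; reflexivity.
Qed.

Lemma prime_5 : prime (Z.of_nat 5).
Proof.
  simpl. apply prime_intro; [lia|]. intros n Hn. apply Zgcd_1_rel_prime.
  assert (H : (n = 1 \/ n = 2 \/ n = 3 \/ n = 4)%Z) by lia.
  repeat (destruct H as [->|H]; [reflexivity|]); subst; reflexivity.
Qed.

Lemma prime_7 : prime (Z.of_nat 7).
Proof.
  simpl. apply prime_intro; [lia|]. intros n Hn. apply Zgcd_1_rel_prime.
  assert (H : (n = 1 \/ n = 2 \/ n = 3 \/ n = 4 \/ n = 5 \/ n = 6)%Z) by lia.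
  repeat (destruct H as [->|H]; [reflexivity|]); subst; reflexivity.
Qed.

Lemma prime_11 : prime (Z.of_nat 11).
Proof.
  simpl. apply prime_intro; [lia|]. intros n Hn. apply Zgcd_1_rel_prime.
  assert (H : (n = 1 \/ n = 2 \/ n = 3 \/ n = 4 \/ n = 5 \/ n = 6 \/ n = 7 \/ n = 8 \/ n = 9 \/ n = 10)%Z) by lia.
  repeat (destruct H as [->|H]; [reflexivity|]); subst; reflexivity.
Qed.

Lemma prime_13 : prime (Z.of_nat 13).
Proof.
  simpl. apply prime_intro; [lia|]. intros n Hn. apply Zgcd_1_rel_prime.
  assert (H : (n = 1 \/ n = 2 \/ n = 3 \/ n = 4 \/ n = 5 \/ n = 6 \/ n = 7 \/ n = 8 \/ n = 9 \/ n = 10 \/ n = 11 \/ n = 12)%Z) by lia.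
  repeat (destruct H as [->|H]; [reflexivity|]); subst; reflexivity.
Qed.

Lemma prime_17 : prime (Z.of_nat 17).
Proof.
  simpl. apply prime_intro; [lia|]. intros n Hn. apply Zgcd_1_rel_prime.
  assert (H : (n = 1 \/ n = 2 \/ n = 3 \/ n = 4 \/ n = 5 \/ n = 6 \/ n = 7 \/ n = 8 \/ n = 9 \/ n = 10 \/ n = 11 \/ n = 12 \/ n = 13 \/ n = 14 \/ n = 15 \/ n = 16)%Z) by lia.
  repeat (destruct H as [->|H]; [reflexivity|]); subst; reflexivity.
Qed.

Lemma prime_19 : prime (Z.of_nat 19).
Proof.
  simpl. apply prime_intro; [lia|]. intros n Hn. apply Zgcd_1_rel_prime.
  assert (H : (n = 1 \/ n = 2 \/ n = 3 \/ n = 4 \/ n = 5 \/ n = 6 \/ n = 7 \/ n = 8 \/ n = 9 \/ n = 10 \/ n = 11 \/ n = 12 \/ n = 13 \/ n = 14 \/ n = 15 \/ n = 16 \/ n = 17 \/ n = 18)%Z) by lia.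
  repeat (destruct H as [->|H]; [reflexivity|]); subst; reflexivity.
Qed.

Lemma prime_23 : prime (Z.of_nat 23).
Proof.
  simpl. apply prime_intro; [lia|]. intros n Hn. apply Zgcd_1_rel_prime.
  assert (H : (n = 1 \/ n = 2 \/ n = 3 \/ n = 4 \/ n = 5 \/ n = 6 \/ n = 7 \/ n = 8 \/ n = 9 \/ n = 10 \/ n = 11 \/ n = 12 \/ n = 13 \/ n = 14 \/ n = 15 \/ n = 16 \/ n = 17 \/ n = 18 \/ n = 19 \/ n = 20 \/ n = 21 \/ n = 22)%Z) by lia.
  repeat (destruct H as [->|H]; [reflexivity|]); subst; reflexivity.
Qed.

Lemma vM_lb (p m k : nat) : prime (Z.of_nat p) -> (1 <= k)%nat -> m = (p ^ k)%nat ->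
  ln (INR p) <= vonMangoldt m.
Proof. intros Hp Hk Hm. apply vM_ge. split; auto. exists k; auto. Qed.

Lemma INRr (n : nat) : INR n = IZR (Z.of_nat n).
Proof. apply INR_IZR_INZ. Qed.

Lemma term_lb m A B : A <= vonMangoldt m -> B <= vonMangoldt (2 * m + 1) -> 0 <= A -> 0 <= B ->
  (1 <= m)%nat -> A * B / (INR m * (INR m + 1)) <= s1_term m.
Proof.
  intros HA HB A0 B0 Hm. unfold s1_term. unfold Rdiv. apply Rmult_le_compat_r.
  left; apply Rinv_0_lt_compat. pose proof (lt_0_INR m ltac:(lia)). nra.
  apply Rmult_le_compat; auto.
Qed.

Lemma P13_lb : 0.620794 <= P 13.
Proof.
  pose proof ln2_lb as L2. pose proof ln3_lb as L3.
  assert (L5 : 1.58 <= ln 5).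
  { assert (ln 24 = 3 * ln 2 + ln 3) by (replace 24 with (2*2*2*3) by lra; rewrite !ln_mult by lra; ring).
    assert (ln 25 = 2 * ln 5) by (replace 25 with (5*5) by lra; rewrite !ln_mult by lra; ring).
    assert (ln 24 <= ln 25) by (apply ln_le; lra). lra. }
  assert (L7 : 1.925 <= ln 7).
  { assert (ln 48 = 4 * ln 2 + ln 3) by (replace 48 with (2*2*2*2*3) by lra; rewrite !ln_mult by lra; ring).
    assert (ln 49 = 2 * ln 7) by (replace 49 with (7*7) by lra; rewrite !ln_mult by lra; ring).
    assert (ln 48 <= ln 49) by (apply ln_le; lra). lra. }
  assert (L11 : 2.37 <= ln 11).
  { assert (ln 120 = 3 * ln 2 + ln 3 + ln 5) by (replace 120 with (2*2*2*3*5) by lra; rewrite !ln_mult by lra; ring).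
    assert (ln 121 = 2 * ln 11) by (replace 121 with (11*11) by lra; rewrite !ln_mult by lra; ring).
    assert (ln 120 <= ln 121) by (apply ln_le; lra). lra. }
  assert (L13 : 2.47 <= ln 13).
  { assert (ln 12 = 2 * ln 2 + ln 3) by (replace 12 with (2*2*3) by lra; rewrite !ln_mult by lra; ring).
    assert (ln 12 <= ln 13) by (apply ln_le; lra). lra. }
  assert (L17 : 2.76 <= ln 17).
  { assert (ln 16 = 4 * ln 2) by (replace 16 with (2*2*2*2) by lra; rewrite !ln_mult by lra; ring).
    assert (ln 16 <= ln 17) by (apply ln_le; lra). lra. }
  assert (L19 : 2.87 <= ln 19).
  { assert (ln 18 = ln 2 + 2 * ln 3) by (replace 18 with (2*3*3) by lra; rewrite !ln_mult by lra; ring).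
    assert (ln 18 <= ln 19) by (apply ln_le; lra). lra. }
  assert (L23 : 3.06 <= ln 23).
  { assert (ln 22 = ln 2 + ln 11) by (replace 22 with (2*11) by lra; rewrite !ln_mult by lra; ring).
    assert (ln 22 <= ln 23) by (apply ln_le; lra). lra. }
  assert (T2 : 0.69 * 1.58 / (INR 2 * (INR 2 + 1)) <= s1_term 2).
  { apply term_lb; try lra; try lia.
    - pose proof (vM_lb 2 2 1 prime_2 ltac:(lia) eq_refl) as V. rewrite INRr in V. simpl in V. lra.
    - replace (2 * 2 + 1)%nat with 5%nat by reflexivity. pose proof (vM_lb 5 5 1 prime_5 ltac:(lia) eq_refl) as V. rewrite INRr in V. simpl in V. lra. }
  assert (T3 : 1.09 * 1.925 / (INR 3 * (INR 3 + 1)) <= s1_term 3).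
  { apply term_lb; try lra; try lia.
    - pose proof (vM_lb 3 3 1 prime_3 ltac:(lia) eq_refl) as V. rewrite INRr in V. simpl in V. lra.
    - replace (2 * 3 + 1)%nat with 7%nat by reflexivity. pose proof (vM_lb 7 7 1 prime_7 ltac:(lia) eq_refl) as V. rewrite INRr in V. simpl in V. lra. }
  assert (T4 : 0.69 * 1.09 / (INR 4 * (INR 4 + 1)) <= s1_term 4).
  { apply term_lb; try lra; try lia.
    - pose proof (vM_lb 2 4 2 prime_2 ltac:(lia) eq_refl) as V. rewrite INRr in V. simpl in V. lra.
    - replace (2 * 4 + 1)%nat with 9%nat by reflexivity. pose proof (vM_lb 3 9 2 prime_3 ltac:(lia) eq_refl) as V. rewrite INRr in V. simpl in V. lra. }
  assert (T5 : 1.58 * 2.37 / (INR 5 * (INR 5 + 1)) <= s1_term 5).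
  { apply term_lb; try lra; try lia.
    - pose proof (vM_lb 5 5 1 prime_5 ltac:(lia) eq_refl) as V. rewrite INRr in V. simpl in V. lra.
    - replace (2 * 5 + 1)%nat with 11%nat by reflexivity. pose proof (vM_lb 11 11 1 prime_11 ltac:(lia) eq_refl) as V. rewrite INRr in V. simpl in V. lra. }
  assert (T8 : 0.69 * 2.76 / (INR 8 * (INR 8 + 1)) <= s1_term 8).
  { apply term_lb; try lra; try lia.
    - pose proof (vM_lb 2 8 3 prime_2 ltac:(lia) eq_refl) as V. rewrite INRr in V. simpl in V. lra.
    - replace (2 * 8 + 1)%nat with 17%nat by reflexivity. pose proof (vM_lb 17 17 1 prime_17 ltac:(lia) eq_refl) as V. rewrite INRr in V. simpl in V. lra. }
  assert (T9 : 1.09 * 2.87 / (INR 9 * (INR 9 + 1)) <= s1_term 9).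
  { apply term_lb; try lra; try lia.
    - pose proof (vM_lb 3 9 2 prime_3 ltac:(lia) eq_refl) as V. rewrite INRr in V. simpl in V. lra.
    - replace (2 * 9 + 1)%nat with 19%nat by reflexivity. pose proof (vM_lb 19 19 1 prime_19 ltac:(lia) eq_refl) as V. rewrite INRr in V. simpl in V. lra. }
  assert (T11 : 2.37 * 3.06 / (INR 11 * (INR 11 + 1)) <= s1_term 11).
  { apply term_lb; try lra; try lia.
    - pose proof (vM_lb 11 11 1 prime_11 ltac:(lia) eq_refl) as V. rewrite INRr in V. simpl in V. lra.
    - replace (2 * 11 + 1)%nat with 23%nat by reflexivity. pose proof (vM_lb 23 23 1 prime_23 ltac:(lia) eq_refl) as V. rewrite INRr in V. simpl in V. lra. }
  assert (T13 : 2.47 * 1.09 / (INR 13 * (INR 13 + 1)) <= s1_term 13).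
  { apply term_lb; try lra; try lia.
    - pose proof (vM_lb 13 13 1 prime_13 ltac:(lia) eq_refl) as V. rewrite INRr in V. simpl in V. lra.
    - replace (2 * 13 + 1)%nat with 27%nat by reflexivity. pose proof (vM_lb 3 27 3 prime_3 ltac:(lia) eq_refl) as V. rewrite INRr in V. simpl in V. lra. }
  assert (N1 := term_nonneg 1). assert (N6 := term_nonneg 6). assert (N7 := term_nonneg 7).
  assert (N10 := term_nonneg 10). assert (N12 := term_nonneg 12).
  unfold P. rewrite !sum_n_Sm by lia. rewrite sum_n_m_zero by lia. unfold plus, zero; simpl.
  rewrite !INRr in *. simpl in *. lra.
Qed.


Lemma sumR_scal (c : R) f a b : sum_n_m (fun k => c * f k) a b = c * sum_n_m f a b.
Proof. exact (@sum_n_m_mult_l R_Ring c f a b). Qed.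

Lemma sumR_plus f g a b : sum_n_m (fun k => f k + g k) a b = sum_n_m f a b + sum_n_m g a b.
Proof. exact (@sum_n_m_plus R_AbelianMonoid f g a b). Qed.

Lemma abs_inv a b : Rabs a <= b -> - b <= a <= b.
Proof. intros H. pose proof (Rabs_maj2 a). pose proof (Rle_abs a). lra. Qed.

Section Main.
Variable x : R.
Hypothesis Hx : 3 <= x.

Let bb (m : nat) : nat := floor_nat (x / INR m).

Lemma bb_spec m : (1 <= m)%nat -> INR (bb m) <= x / INR m < INR (bb m) + 1.
Proof.
  intros Hm. apply floor_spec. apply Rdiv_le_0_compat. lra. apply lt_0_INR; lia.
Qed.

Lemma bb_1 : bb 1 = floor_nat x.
Proof. unfold bb. simpl. unfold Rdiv. rewrite Rinv_1, Rmult_1_r. reflexivity. Qed.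

Lemma bb_last : bb (S (floor_nat x)) = 0%nat.
Proof.
  unfold bb. apply floor_unique.
  - apply Rdiv_le_0_compat. lra. apply lt_0_INR; lia.
  - destruct (floor_spec x ltac:(lra)) as [H1 H2]. rewrite S_INR. simpl. split.
    apply Rdiv_le_0_compat; lra.
    apply Rmult_lt_reg_r with (INR (floor_nat x) + 1). lra.
    unfold Rdiv. rewrite Rmult_assoc, Rinv_l by lra. lra.
Qed.

Lemma bb_mono m : (1 <= m)%nat -> (bb (S m) <= bb m)%nat.
Proof.
  intros Hm. unfold bb. apply floor_ge. apply Rdiv_le_0_compat. lra. apply lt_0_INR; lia.
  destruct (bb_spec (S m) ltac:(lia)) as [H1 _]. eapply Rle_trans. exact H1.
  apply Rmult_le_compat_l. lra. apply Rinv_le_contravar. apply lt_0_INR; lia.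
  apply le_INR; lia.
Qed.

Lemma bb_block m n : (1 <= m)%nat -> (bb (S m) < n)%nat -> (n <= bb m)%nat ->
  floor_nat (x / INR n) = m.
Proof.
  intros Hm H1 H2. assert (Hn : 0 < INR n) by (apply lt_0_INR; lia).
  assert (Hm' : 0 < INR m) by (apply lt_0_INR; lia).
  destruct (bb_spec m Hm) as [A1 A2]. destruct (bb_spec (S m) ltac:(lia)) as [B1 B2].
  apply le_INR in H2. assert (H1' : INR (S (bb (S m))) <= INR n) by (apply le_INR; lia).
  rewrite S_INR in H1', B1, B2.
  apply floor_unique. apply Rdiv_le_0_compat; lra.
  assert (E1 : INR n * INR m <= x).
  { assert (INR n <= x / INR m) by lra.
    apply Rmult_le_compat_r with (r := INR m) in H; [|lra].
    unfold Rdiv in H. rewrite Rmult_assoc, Rinv_l in H by lra. lra. }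
  assert (E2 : x < INR n * (INR m + 1)).
  { assert (x / (INR m + 1) < INR n) by lra.
    apply Rmult_lt_compat_r with (r := INR m + 1) in H; [|lra].
    unfold Rdiv in H. rewrite Rmult_assoc, Rinv_l in H by lra. lra. }
  split.
  - apply Rmult_le_reg_r with (INR n); auto. unfold Rdiv. rewrite Rmult_assoc, Rinv_l by lra. lra.
  - apply Rmult_lt_reg_r with (INR n); auto. unfold Rdiv. rewrite Rmult_assoc, Rinv_l by lra. lra.
Qed.

Let d (m : nat) : R := INR (bb m) - INR (bb (S m)).

Lemma S_decomp : S_sum x = sum_n_m (fun m => d m * gg m) 1 (floor_nat x).
Proof.
  unfold S_sum. change (sum_n_m (fun n => gg (floor_nat (x / INR n))) 1 (floor_nat x) = sum_n_m (fun m => d m * gg m) 1 (floor_nat x)).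
  assert (E := block_decomp (fun n => gg (floor_nat (x / INR n))) bb (floor_nat x)
                 ltac:(intros; apply bb_mono; lia)).
  rewrite bb_last, bb_1 in E. rewrite E.
  apply sum_n_m_ext_loc. intros m Hm.
  rewrite (sum_n_m_ext_loc _ (fun _ => gg m)).
  - rewrite sum_const_R. unfold d. rewrite !S_INR. apply (fun a b c => (ltac:(ring) : (a + 1 - (b + 1)) * c = (a - b) * c :> R)).
    pose proof (bb_mono m ltac:(lia)). lia.
  - intros n Hn. rewrite (bb_block m n); auto; lia.
Qed.


Let Lx := (2 * ln x) ^ 2.

Lemma lnx_ge1 : 1 <= ln x.
Proof.
  pose proof ln3_lb. assert (ln 3 <= ln x) by (apply ln_le; lra). lra.
Qed.

Lemma gg_le_L m : (1 <= m)%nat -> (m <= floor_nat x)%nat -> gg m <= Lx.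
Proof.
  intros H1 H2. eapply Rle_trans. apply gg_le_lnln; auto.
  destruct (floor_spec x ltac:(lra)) as [F1 F2].
  assert (Hm : 1 <= INR m) by (apply (le_INR 1); lia).
  assert (Hmx : INR m <= x) by (apply le_INR in H2; lra).
  assert (E : INR (2*m+1) = 2 * INR m + 1) by (rewrite plus_INR, mult_INR; simpl; ring).
  pose proof lnx_ge1.
  assert (A : ln (INR m) <= 2 * ln x) by (assert (ln (INR m) <= ln x) by (apply ln_le; lra); lra).
  assert (B : ln (INR (2*m+1)) <= 2 * ln x).
  { rewrite E. assert (ln (2 * INR m + 1) <= ln (3 * x)) by (apply ln_le; lra).
    rewrite ln_mult in H0 by lra. pose proof ln3_lb. assert (ln 3 <= ln x) by (apply ln_le; lra). lra. }
  unfold Lx. simpl. rewrite Rmult_1_r. apply Rmult_le_compat; auto.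
  apply ln_nonneg_nat; auto. apply ln_nonneg_nat; lia.
Qed.

Lemma d_bound m : (1 <= m)%nat -> Rabs (d m - x / (INR m * (INR m + 1))) <= 1.
Proof.
  intros Hm. destruct (bb_spec m Hm) as [A1 A2]. destruct (bb_spec (S m) ltac:(lia)) as [B1 B2].
  rewrite S_INR in B1, B2.
  assert (Hm' : 0 < INR m) by (apply lt_0_INR; lia).
  assert (E : x / INR m - x / (INR m + 1) = x / (INR m * (INR m + 1))) by (field; lra).
  unfold d. apply Rabs_le. lra.
Qed.

Lemma d_nonneg m : (1 <= m)%nat -> 0 <= d m.
Proof. intros Hm. unfold d. pose proof (bb_mono m Hm). apply le_INR in H. lra. Qed.

Lemma xterm m : (1 <= m)%nat -> x * s1_term m = gg m * (x / (INR m * (INR m + 1))).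
Proof.
  intros Hm. assert (Hm' : 0 < INR m) by (apply lt_0_INR; lia).
  unfold s1_term, gg. field. lra.
Qed.

Lemma partA N : (1 <= N)%nat -> (N <= floor_nat x)%nat ->
  Rabs (sum_n_m (fun m => d m * gg m) 1 N - x * P N) <= INR N * Lx.
Proof.
  intros H1 H2. unfold P. rewrite <- sumR_scal.
  assert (Hc : sum_n_m (fun _ => Lx) 1 N = INR N * Lx).
  { rewrite sum_const_R by lia. rewrite S_INR. simpl. ring. }
  apply Rabs_le. split.
  - assert (sum_n_m (fun k => x * s1_term k + - Lx) 1 N <= sum_n_m (fun m => d m * gg m) 1 N).
    { apply sum_le_loc. intros j Hj. rewrite xterm by lia.
      pose proof (d_bound j ltac:(lia)). apply abs_inv in H. pose proof (gg_nonneg j).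
      pose proof (gg_le_L j ltac:(lia) ltac:(lia)). nra. }
    rewrite sumR_plus in H. rewrite (sum_const_R (-Lx)) in H by lia. rewrite S_INR in H.
    replace (INR N + 1 - INR 1) with (INR N) in H by (simpl; ring). lra.
  - assert (sum_n_m (fun m => d m * gg m) 1 N <= sum_n_m (fun k => x * s1_term k + Lx) 1 N).
    { apply sum_le_loc. intros j Hj. rewrite xterm by lia.
      pose proof (d_bound j ltac:(lia)). apply abs_inv in H. pose proof (gg_nonneg j).
      pose proof (gg_le_L j ltac:(lia) ltac:(lia)). nra. }
    rewrite sumR_plus, Hc in H. lra.
Qed.

Lemma partB N : (1 <= N)%nat -> (N <= floor_nat x)%nat ->
  0 <= sum_n_m (fun m => d m * gg m) (S N) (floor_nat x) <= Lx * (x / INR (S N)).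
Proof.
  intros H1 H2. split.
  - apply sum_ge0. intros j Hj. apply Rmult_le_pos. apply d_nonneg; lia. apply gg_nonneg.
  - eapply Rle_trans. apply (sum_le_loc _ (fun m => Lx * d m)).
    { intros j Hj. rewrite Rmult_comm. apply Rmult_le_compat_r. apply d_nonneg; lia.
      apply gg_le_L; lia. }
    rewrite sumR_scal. unfold d.
    rewrite (sum_telescope (fun m => INR (bb m))) by lia. rewrite bb_last. simpl (INR 0).
    assert (0 <= Lx) by (unfold Lx; apply pow2_ge_0).
    apply Rmult_le_compat_l; auto. destruct (bb_spec (S N) ltac:(lia)). lra.
Qed.

Lemma main_bound N l : (1 <= N)%nat -> (N <= floor_nat x)%nat ->
  P N <= l <= P N + 44 / sqrt (INR (S N)) ->
  - (INR N * Lx) - 44 * x / sqrt (INR (S N)) <= S_sum x - l * x <=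
  INR N * Lx + Lx * (x / INR (S N)).
Proof.
  intros H1 H2 Hl. rewrite S_decomp.
  rewrite (sum_n_m_Chasles _ 1 N (floor_nat x)) by lia.
  pose proof (partA N H1 H2) as A. apply abs_inv in A. pose proof (partB N H1 H2) as B.
  change (plus ?a ?b) with (a + b).
  assert (x * l <= x * P N + x * (44 / sqrt (INR (S N)))) by nra.
  assert (x * P N <= x * l) by nra.
  unfold Rdiv in *. lra.
Qed.

End Main.


Lemma div_le_of a b c : 0 < b -> a <= c * b -> a / b <= c.
Proof. intros Hb H. apply Rmult_le_reg_r with b; auto. unfold Rdiv. rewrite Rmult_assoc, Rinv_l by lra. lra. Qed.

Theorem theorem12p2 :
  exists s1 : R,
    is_series (fun n : nat => s1_term (S n)) s1 /\
    620794 / 1000000 <= s1 /\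
    forall eps : R, 0 < eps ->
      exists C x0 : R, forall x : R, x0 <= x ->
        Rabs (S_sum x - s1 * x) <=
          C * (Rpower x ((2 + eps) / 3) * (ln x) ^ 2).
Proof.
  destruct series_exists as [l [Hs Hl]]. exists l. split; [exact Hs|]. split.
  { pose proof P13_lb. destruct (Hl 13%nat ltac:(lia)). lra. }
  intros eps Heps. exists 52, 3. intros x Hx.
  set (t := Rpower x (1/3)).
  assert (Ht0 : 0 < t) by (unfold t, Rpower; apply exp_pos).
  assert (Ht3 : t * t * t = x).
  { unfold t. rewrite <- !Rpower_plus. replace (1/3 + 1/3 + 1/3) with 1 by field. apply Rpower_1; lra. }
  assert (Ht2 : t * t = Rpower x (2/3)).
  { unfold t. rewrite <- !Rpower_plus. f_equal. field. }
  assert (Ht1 : 1 <= t).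
  { unfold t. assert (Hr : Rpower x 0 <= Rpower x (1/3)) by (apply Rle_Rpower; lra). rewrite Rpower_O in Hr by lra. exact Hr. }
  assert (Hpow : t * t <= Rpower x ((2 + eps) / 3)).
  { rewrite Ht2. apply Rle_Rpower; lra. }
  set (N := floor_nat (t * t)).
  destruct (floor_spec (t*t) ltac:(nra)) as [N1 N2]. fold N in N1, N2.
  assert (HN1 : (1 <= N)%nat) by (apply floor_ge; simpl; nra).
  assert (HN2 : (N <= floor_nat x)%nat) by (apply floor_ge; nra).
  pose proof (main_bound x Hx N l HN1 HN2 (Hl N HN1)) as M.
  pose proof (lnx_ge1 x Hx) as Lg.
  set (L := ln x) in *.
  assert (HS : t * t < INR (S N)) by (rewrite S_INR; lra).
  assert (Hsq : t <= sqrt (INR (S N))).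
  { rewrite <- (sqrt_square t) by lra. apply sqrt_le_1_alt. lra. }
  assert (D1 : x / INR (S N) <= t * t).
  { apply div_le_of. nra. nra. }
  assert (D2 : 44 * x / sqrt (INR (S N)) <= 44 * (t * t)).
  { apply div_le_of. lra. nra. }
  assert (D3 : INR N <= t * t) by lra.
  assert (Lx0 : 0 <= (2 * L) ^ 2) by apply pow2_ge_0.
  assert (E1 : INR N * (2 * L) ^ 2 <= t * t * (2 * L) ^ 2) by (apply Rmult_le_compat_r; lra).
  assert (E2 : (2 * L) ^ 2 * (x / INR (S N)) <= (2 * L) ^ 2 * (t * t)) by (apply Rmult_le_compat_l; lra).
  assert (E3 : 44 * (t * t) <= 44 * (t * t) * L ^ 2).
  { assert (1 <= L ^ 2) by nra. nra. }
  assert (Fin : Rabs (S_sum x - l * x) <= 52 * (t * t * L ^ 2)).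
  { apply Rabs_le. simpl in *. nra. }
  eapply Rle_trans. exact Fin. apply Rmult_le_compat_l. lra.
  apply Rmult_le_compat_r. apply pow2_ge_0. exact Hpow.
Qed.
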